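(* Let $C\subseteq\mathbb{R}^n$ be a nonempty compact convex set with diameter $D$, and let $f:\mathbb{R}^n\to\mathbb{R}$ be an abs-smooth function such that, for every $x\in C$, its piecewise linearization $f_{PL,x}$ is convex on $C$. Let $\mathcal{C}_f$ be the curvature constant of $f$ on $C$, let $x^*\in C$ be a minimizer of $f$ on $C$, and fix $\epsilon\ge0$. Consider the relaxed ASFW iteration: $x_0\in C$, and for $t=0,1,2,\dots$ set $a_t=2t+2$, $A_t=\sum_{i=0}^t a_i=(t+1)(t+2)$, $\alpha_t=a_t/A_t=2/(t+2)$, choose $v_t\in C$ with $$\Delta f(x_t;\alpha_t(v_t-x_t))\le\min_{w\in C}\Delta f(x_t;\alpha_t(w-x_t))+\tfrac12\epsilon\alpha_t^2\mathcal{C}_f,$$ and set $x_{t+1}=(1-\alpha_t)x_t+\alpha_t v_t$. Define $$L_t=\frac{1}{A_t}\Big(\sum_{i=0}^t a_if(x_i)+\sum_{i=0}^t a_i\Big[\frac{\Delta f(x_i;\alpha_i(v_i-x_i))}{\alpha_i}-\frac12\mathcal{C}_f-\frac{\alpha_i}{2}\epsilon\,\mathcal{C}_f\Big]\Big)$$ and $G_t=f(x_{t+1})-L_t$. Then for every $t\ge0$, $$f(x_{t+1})-f(x^* )\le G_t\le\frac12\mathcal{C}_f+\frac{2\,\mathcal{C}_f}{t+2}(1+2\epsilon).$$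
   Context: A function $f:\mathbb{R}^n\to\mathbb{R}$ is abs-smooth if it is locally Lipschitz and admits an abs-smooth form: for some $s\in\mathbb{N}\cup\{0\}$ there are $F=(F_1,\dots,F_s)\in\mathcal{C}^d(\mathbb{R}^{n+s+s},\mathbb{R}^s)$ and $\varphi\in\mathcal{C}^d(\mathbb{R}^{n+s},\mathbb{R})$ with $d\ge1$ such that $y=f(x)$ is computed by $z_i=F_i(x,z_1,\dots,z_{i-1},|z_1|,\dots,|z_{i-1}|)$ for $i=1,\dots,s$ and $y=\varphi(x,z)$. For a point $\mathring{x}$, write $\mathring z=z(\mathring x)$ and let $Z=\partial_x F$, $M=\partial_z F$, $L=\partial_{|z|}F$ (evaluated at $(\mathring x,\mathring z,|\mathring z|)$; $M,L$ strictly lower triangular), $a=\partial_x\varphi$, $b=\partial_z\varphi$ (evaluated at $(\mathring x,\mathring z)$). The piecewise linearization of $f$ at $\mathring x$ is $f_{PL,\mathring x}(x)=d_0+a^Tx+b^Tz$ where $z$ solves $z=c+Zx+Mz+L|z|$, with constants $c,d_0$ chosen so that $f_{PL,\mathring x}(\mathring x)=f(\mathring x)$ (namely $c=\mathring z-Z\mathring x-M\mathring z-L|\mathring z|$, $d_0=f(\mathring x)-a^T\mathring x-b^T\mathring z$). The abs-linearization is $\Delta f(\mathring x;x-\mathring x):=f_{PL,\mathring x}(x)-f(\mathring x)$. ''$f_{PL,x}$ convex on $C$'' means $f_{PL,x}(\lambda y+(1-\lambda)w)\le\lambda f_{PL,x}(y)+(1-\lambda)f_{PL,x}(w)$ for all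 $y,w\in C$, $\lambda\in[0,1]$. The curvature constant of $f$ on $C$ is $$\mathcal{C}_f:=\sup_{x,v\in C,\ \alpha\in(0,1],\ y=x+\alpha(v-x)}\frac{2}{\alpha^2}\big|f(y)-f(x)-\Delta f(x;y-x)\big|,$$ which is finite for compact $C$. *)

(* Defs.v *)
From HB Require Import structures.
From mathcomp Require Import all_boot all_order all_algebra.
From mathcomp Require Import all_classical all_reals all_analysis.
Import Order.TTheory GRing.Theory Num.Theory.
Import numFieldNormedType.Exports.

Set Implicit Arguments.
Unset Strict Implicit.
Unset Printing Implicit Defensive.

Local Open Scope classical_set_scope.
Local Open Scope ring_scope.

Section AbsSmooth.
Variables (R : realType) (n s : nat).

Definition absv (z : 'rV[R]_s) : 'rV[R]_s := map_mx (fun a => `|a|) z.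

(* continuously differentiable (C^1) map between finite-dimensional normed spaces:
   differentiable everywhere, with differential continuous in the base point
   (tested on every direction, which is equivalent in finite dimension). *)
Definition C1 (V W : normedModType R) (g : V -> W) : Prop :=
  (forall p, differentiable g p) /\ (forall u : V, continuous (fun p => 'd g p u)).

Definition lower_tri (F : 'rV[R]_n * 'rV[R]_s * 'rV[R]_s -> 'rV[R]_s) : Prop :=
  forall (i : 'I_s) (x : 'rV[R]_n) (z w z' w' : 'rV[R]_s),
    (forall j : 'I_s, (j < i)%N -> z 0 j = z' 0 j /\ w 0 j = w' 0 j) ->
    F (x, z, w) 0 i = F (x, z', w') 0 i.

(* solution of a triangular fixed point system z = G z, computed by
   forward substitution: after s sweeps every component is determined *)
Definition tri_solve (G : 'rV[R]_s -> 'rV[R]_s) : 'rV[R]_s := iter s G 0.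

Definition zval (F : 'rV[R]_n * 'rV[R]_s * 'rV[R]_s -> 'rV[R]_s) (x : 'rV[R]_n)
  : 'rV[R]_s := tri_solve (fun z => F (x, z, absv z)).

Definition abs_smooth_form (f : 'rV[R]_n -> R)
  (F : 'rV[R]_n * 'rV[R]_s * 'rV[R]_s -> 'rV[R]_s)
  (phi : 'rV[R]_n * 'rV[R]_s -> R) : Prop :=
  [/\ C1 F, C1 phi, lower_tri F & forall x, f x = phi (x, zval F x)].

Definition locally_lipschitz (f : 'rV[R]_n -> R) : Prop :=
  forall x : 'rV[R]_n, exists2 r : R, 0 < r & exists K : R,
    forall y z, ball x r y -> ball x r z -> `|f y - f z| <= K * `|y - z|.

Definition fPL (f : 'rV[R]_n -> R)
  (F : 'rV[R]_n * 'rV[R]_s * 'rV[R]_s -> 'rV[R]_s)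
  (phi : 'rV[R]_n * 'rV[R]_s -> R) (x0 x : 'rV[R]_n) : R :=
  let z0 := zval F x0 in
  let p0 := (x0, z0, absv z0) in
  let Z := fun dx : 'rV[R]_n => 'd F p0 (dx, 0, 0) in
  let M := fun dz : 'rV[R]_s => 'd F p0 (0, dz, 0) in
  let L := fun dw : 'rV[R]_s => 'd F p0 (0, 0, dw) in
  let a := fun dx : 'rV[R]_n => 'd phi (x0, z0) (dx, 0) in
  let b := fun dz : 'rV[R]_s => 'd phi (x0, z0) (0, dz) in
  let c := z0 - Z x0 - M z0 - L (absv z0) in
  let d0 := f x0 - a x0 - b z0 in
  let z := tri_solve (fun z => c + Z x + M z + L (absv z)) in
  d0 + a x + b z.

Definition absLin f F phi (x0 d : 'rV[R]_n) : R := fPL f F phi x0 (x0 + d) - f x0.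

Definition convex_on_set (C : set 'rV[R]_n) (g : 'rV[R]_n -> R) : Prop :=
  forall y w (l : R), C y -> C w -> 0 <= l <= 1 ->
    g (l *: y + (1 - l) *: w) <= l * g y + (1 - l) * g w.

Definition curv_set f F phi (C : set 'rV[R]_n) : set R :=
  [set r | exists x v (al : R), [/\ C x, C v, 0 < al <= 1 &
     r = 2 / al ^+ 2 *
       `|f (x + al *: (v - x)) - f x - absLin f F phi x ((x + al *: (v - x)) - x)|]].

Definition curv_const f F phi C : R := sup (curv_set f F phi C).

Definition aw (t : nat) : R := (2 * t + 2)%:R.
Definition Aw (t : nat) : R := \sum_(i < t.+1) aw i.
Definition alphaw (t : nat) : R := aw t / Aw t.

Definition Lbound f F phi (Cf eps : R) (x v : nat -> 'rV[R]_n) (t : nat) : R :=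
  (Aw t)^-1 * (\sum_(i < t.+1) aw i * f (x i) +
    \sum_(i < t.+1) aw i * (absLin f F phi (x i) (alphaw i *: (v i - x i)) / alphaw i
                           - Cf / 2 - alphaw i / 2 * eps * Cf)).

Definition gap f F phi Cf eps x v (t : nat) : R :=
  f (x t.+1) - Lbound f F phi Cf eps x v t.

End AbsSmooth.

(* Main.v *)
Require Import Defs.
From HB Require Import structures.
From mathcomp Require Import all_boot all_order all_algebra.
From mathcomp Require Import all_classical all_reals all_analysis.
From mathcomp Require Import ring lra.
Import Order.TTheory GRing.Theory Num.Theory.
Import numFieldNormedType.Exports.
Local Open Scope classical_set_scope.
Local Open Scope ring_scope.

Lemma Aw_closed (R : realType) t : Aw R t = (t.+1)%:R * (t.+2)%:R.
Proof.
elim: t => [|t IH]; first by rewrite /Aw big_ord1 /aw /= mul1r.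
rewrite /Aw big_ord_recr /= -/(Aw R t) IH /aw.
rewrite !natrD !natrM !mulrSr /=. ring.
Qed.
Lemma aw_gt0 (R : realType) t : 0 < aw R t.
Proof. by rewrite /aw ltr0n addn2. Qed.

Lemma Aw_gt0 (R : realType) t : 0 < Aw R t.
Proof. by rewrite Aw_closed mulr_gt0 // ltr0n. Qed.

Lemma aw_eq (R : realType) t : aw R t = 2 * (t.+1)%:R.
Proof. by rewrite /aw -mulnSr natrM. Qed.
Lemma alphaw_eq (R : realType) t : alphaw R t = 2 / (t%:R + 2).
Proof.
rewrite /alphaw aw_eq Aw_closed -(addn2 t) -(addn1 t) !natrD.
have k0 : (0 : R) <= t%:R by [].
move: (t%:R : R) k0 => k k0.
have h1 : k + 1 != 0 by rewrite gt_eqF //; lra.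
have h2 : k + 2 != 0 by rewrite gt_eqF //; lra.
rewrite invfM -mulrA mulVKf //.
Qed.

Lemma alphaw_gt0 (R : realType) t : 0 < alphaw R t.
Proof. by rewrite /alphaw divr_gt0 // ?aw_gt0 ?Aw_gt0. Qed.

Lemma alphaw_le1 (R : realType) t : alphaw R t <= 1.
Proof.
rewrite alphaw_eq.
have k0 : (0 : R) <= t%:R by [].
move: (t%:R : R) k0 => k k0.
by rewrite ler_pdivrMr ?mul1r; lra.
Qed.

Lemma aw_alpha_le4 (R : realType) t : aw R t * alphaw R t <= 4.
Proof.
rewrite alphaw_eq aw_eq -(addn1 t) natrD.
have k0 : (0 : R) <= t%:R by [].
move: (t%:R : R) k0 => k k0.
rewrite mulrA ler_pdivrMr; lra.
Qed.

Section Main.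
Variables (R : realType) (n s : nat) (C : set 'rV[R]_n)
  (f : 'rV[R]_n -> R)
  (F : 'rV[R]_n * 'rV[R]_s * 'rV[R]_s -> 'rV[R]_s)
  (phi : 'rV[R]_n * 'rV[R]_s -> R).
Hypothesis hub : has_ubound (curv_set f F phi C).
Local Notation Cf := (curv_const f F phi C).

Lemma curv_le y w (al : R) : C y -> C w -> 0 < al <= 1 ->
  `|f (y + al *: (w - y)) - f y - absLin f F phi y ((y + al *: (w - y)) - y)|
    <= al ^+ 2 / 2 * Cf.
Proof.
move=> Cy Cw hal.
have al0 : 0 < al by case/andP: hal.
have := ub_le_sup hub; move/ubP => H.
have key : forall d : R, 2 / al ^+ 2 * d <= Cf -> d <= al ^+ 2 / 2 * Cf.
  move=> d hd.
  have a20 : 0 < al ^+ 2 by rewrite exprn_gt0.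
  have -> : d = al ^+ 2 / 2 * (2 / al ^+ 2 * d).
    rewrite mulrA; field; rewrite gt_eqF //.
  by rewrite ler_pM2l // divr_gt0.
apply: key; apply: H.
by exists y, w, al.
Qed.

Lemma Cf_ge0 y : C y -> 0 <= Cf.
Proof.
move=> Cy.
have := ub_le_sup hub; move/ubP => H.
apply: le_trans (H _ (ex_intro _ y (ex_intro _ y (ex_intro _ 1 (And4 Cy Cy _ erefl))))).
  by rewrite mulr_ge0.
by rewrite ltr01 lexx.
Qed.

Lemma small_zero (d c : R) : 0 <= d -> 0 <= c ->
  (forall al : R, 0 < al <= 1 -> d <= al ^+ 2 / 2 * c) -> d = 0.
Proof.
move=> d0 Cf0 hd.
apply/eqP; rewrite eq_le d0 andbT; apply/negP => /negP; rewrite -ltNge => dpos.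
pose al := d / (c + d + 1).
have den : 0 < c + d + 1 by lra.
have eqal : al * (c + d + 1) = d by rewrite /al mulfVK // gt_eqF.
have al0 : 0 < al by rewrite divr_gt0.
have al1 : al <= 1 by rewrite /al ler_pdivrMr // mul1r; lra.
have := hd al; rewrite al0 al1 => /(_ isT) h.
have h2 : al ^+ 2 * c <= al * c by rewrite expr2 -mulrA ler_piMl // mulr_ge0 // ltW.
have h3 : 0 <= al * d by rewrite mulr_ge0 // ltW.
have h4 : 0 <= al * c by rewrite mulr_ge0 // ltW.
have h5 : al * c + al * d + al = d by rewrite -[in RHS]eqal !mulrDr mulr1.
have h6 : al ^+ 2 / 2 * c = (al ^+ 2 * c) / 2 by ring.
lra.
Qed.

Lemma fPL_self y : C y -> fPL f F phi y y = f y.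
Proof.
move=> Cy.
have : `|f y - fPL f F phi y y| = 0.
  apply: (@small_zero _ Cf) => //; first exact: Cf_ge0 Cy.
  move=> al hal; have := curv_le _ _ _ Cy Cy hal.
  by rewrite subrr scaler0 addr0 !subrr /absLin addr0 sub0r normrN distrC.
by move/eqP; rewrite normr_eq0 subr_eq0 => /eqP <-.
Qed.

End Main.

Lemma vec_id1 (R : realType) n (a : R) (y w : 'rV[R]_n) :
  y + a *: (w - y) = a *: w + (1 - a) *: y.
Proof. by apply/rowP => j; rewrite !mxE; ring. Qed.

Lemma vec_id2 (R : realType) n (a : R) (y w : 'rV[R]_n) :
  (1 - a) *: y + a *: w = y + a *: (w - y).
Proof. by apply/rowP => j; rewrite !mxE; ring. Qed.

Lemma vec_id3 (R : realType) n (z w : 'rV[R]_n) : z + w - z = w.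
Proof. by apply/rowP => j; rewrite !mxE; ring. Qed.

Lemma vec_id4 (R : realType) n (z w : 'rV[R]_n) : z + (1:R) *: (w - z) = w.
Proof. by apply/rowP => j; rewrite !mxE; ring. Qed.

Theorem mainTheorem7 (R : realType) (n s : nat) (C : set 'rV[R]_n)
  (f : 'rV[R]_n -> R)
  (F : 'rV[R]_n * 'rV[R]_s * 'rV[R]_s -> 'rV[R]_s)
  (phi : 'rV[R]_n * 'rV[R]_s -> R)
  (xstar : 'rV[R]_n) (eps : R) (x v : nat -> 'rV[R]_n) :
  (exists c, C c) -> compact C -> convex_set C ->
  locally_lipschitz f -> abs_smooth_form f F phi ->
  (forall x0, C x0 -> convex_on_set C (fPL f F phi x0)) ->
  has_ubound (curv_set f F phi C) ->
  C xstar -> (forall y, C y -> f xstar <= f y) ->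
  0 <= eps ->
  C (x 0%N) ->
  (forall t, C (v t)) ->
  (forall t (w : 'rV[R]_n), C w ->
     absLin f F phi (x t) (alphaw R t *: (v t - x t)) <=
     absLin f F phi (x t) (alphaw R t *: (w - x t))
       + 1 / 2 * eps * alphaw R t ^+ 2 * curv_const f F phi C) ->
  (forall t, x t.+1 = (1 - alphaw R t) *: x t + alphaw R t *: v t) ->
  forall t : nat,
    f (x t.+1) - f xstar <= gap f F phi (curv_const f F phi C) eps x v t /\
    gap f F phi (curv_const f F phi C) eps x v t <=
      curv_const f F phi C / 2
      + 2 * curv_const f F phi C / (t%:R + 2) * (1 + 2 * eps).
Proof.
move=> hne hcomp hconvC hlip has hconvPL hub Cxs hmin eps0 Cx0 Cv hstep hx t.
have Cf0 : 0 <= curv_const f F phi C := @Cf_ge0 R n s C f F phi hub _ Cx0.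
have cl := @curv_le R n s C f F phi hub.
have fself := @fPL_self R n s C f F phi hub.
move: Cf0 hstep cl; set Cf := curv_const f F phi C => Cf0 hstep cl.
have xC : forall k, C (x k).
  elim=> [//|k IH]; rewrite hx.
  have a0 := alphaw_gt0 R k; have a1 := alphaw_le1 R k.
  have := hconvC (v k) (x k) (Itv01 (ltW a0) a1) (mem_set (Cv k)) (mem_set IH).
  by rewrite inE /= addrC.
pose l i := absLin f F phi (x i) (alphaw R i *: (v i - x i)).
pose term i := aw R i * f (x i) +
  aw R i * (l i / alphaw R i - Cf / 2 - alphaw R i / 2 * eps * Cf).
have termlo : forall i, term i <= aw R i * f xstar.
  move=> i.
  have al0 := alphaw_gt0 R i; have al1 := alphaw_le1 R i.
  have a0 := aw_gt0 R i.
  move: al0 al1 a0 (hstep i xstar Cxs).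
  rewrite /term -/(l i).
  set al := alphaw R i; set a := aw R i => al0 al1 a0 hs.
  have hc := hconvPL (x i) (xC i) xstar (x i) al Cxs (xC i).
  rewrite fself // in hc.
  have := hc; rewrite (ltW al0) al1 => /(_ isT) {}hc.
  have e1 : absLin f F phi (x i) (al *: (xstar - x i)) =
      fPL f F phi (x i) (al *: xstar + (1 - al) *: x i) - f (x i).
    by rewrite /absLin vec_id1.
  have := cl (x i) xstar 1 (xC i) Cxs; rewrite ltr01 lexx => /(_ isT).
  rewrite vec_id4 /absLin [x i + (xstar - x i)]addrC subrK.
  rewrite expr1n ler_norml => /andP [hcur _].
  have m1 : fPL f F phi (x i) (al *: xstar + (1 - al) *: x i) - f (x i)
      <= al * (fPL f F phi (x i) xstar - f (x i)) by lra.
  have m2 : al * (fPL f F phi (x i) xstar - f (x i)) <=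
      al * (f xstar - f (x i) + Cf / 2).
    by rewrite ler_pM2l //; lra.
  have m3 : 1 / 2 * eps * al ^+ 2 * Cf = al * (eps * al * Cf / 2) by ring.
  have hK : l i <= al * (f xstar - f (x i) + Cf / 2 + eps * al * Cf / 2).
    rewrite mulrDr; lra.
  have hK2 : l i / al <= f xstar - f (x i) + Cf / 2 + eps * al * Cf / 2.
    by rewrite ler_pdivrMr // mulrC.
  rewrite -mulrDr ler_pM2l //; lra.
have termhi : forall i, Aw R i * f (x i.+1) - (Aw R i - aw R i) * f (x i)
    - aw R i * Cf / 2 - 2 * Cf - 2 * eps * Cf <= term i.
  move=> i.
  have al0 := alphaw_gt0 R i; have al1 := alphaw_le1 R i.
  have a0 := aw_gt0 R i; have A0 := Aw_gt0 R i.
  have a4 := aw_alpha_le4 R i.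
  have H1 := cl (x i) (v i) (alphaw R i) (xC i) (Cv i).
  rewrite al0 al1 in H1.
  have := H1 isT; rewrite vec_id3 -vec_id2 -hx ler_norml => /andP [_ {}H1].
  have H6 : aw R i * (l i / alphaw R i) = Aw R i * l i.
    rewrite /alphaw; field; apply/andP; split; rewrite gt_eqF //; have := ler0n R i; lra.
  have H3 : Aw R i * (alphaw R i ^+ 2 / 2 * Cf) = aw R i * alphaw R i * Cf / 2.
    by rewrite /alphaw; field; rewrite gt_eqF.
  move: H1 H6 H3 a4 al0 al1 a0 A0.
  rewrite /term -/(l i).
  set al := alphaw R i; set a := aw R i; set A := Aw R i.
  move=> H1 H6 H3 a4 al0 al1 a0 A0.
  have H2 : A * (f (x i.+1) - f (x i) - l i) <= A * (al ^+ 2 / 2 * Cf).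
    by rewrite ler_pM2l.
  have H4 : a * al * Cf <= 4 * Cf by move: (ler_wpM2r Cf0 a4).
  have H5 : a * al * (eps * Cf) <= 4 * (eps * Cf).
    have H7 : 0 <= eps * Cf by rewrite mulr_ge0.
    by move: (ler_wpM2r H7 a4).
  have H7 : 0 <= eps * Cf by rewrite mulr_ge0.
  lra.
have ind : forall k, (\sum_(i < k) aw R i) * f (x k) - (\sum_(i < k) aw R i) * Cf / 2
    - 2 * k%:R * Cf - 2 * k%:R * eps * Cf <= \sum_(i < k) term i.
  elim=> [|k IH]; first by rewrite !big_ord0; lra.
  move: IH; have := termhi k; rewrite /Aw.
  rewrite !big_ord_recr /= -(addn1 k) natrD.
  set B := \sum_(i < k) aw R i.
  move=> h IH; lra.
have hsplit : Lbound f F phi Cf eps x v t = (Aw R t)^-1 * \sum_(i < t.+1) term i.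
  by rewrite /Lbound -big_split.
have A0 := Aw_gt0 R t.
rewrite /gap hsplit; split.
  suff : (Aw R t)^-1 * \sum_(i < t.+1) term i <= f xstar by lra.
  rewrite mulrC ler_pdivrMr // /Aw mulr_sumr.
  apply: ler_sum => i _; rewrite mulrC; exact: termlo.
have := ind t.+1; rewrite -/(Aw R t) => hi.
have e : Aw R t * (2 * (1 + eps) * Cf / (t%:R + 2)) = 2 * (t.+1)%:R * Cf + 2 * (t.+1)%:R * eps * Cf.
  rewrite Aw_closed -(addn2 t) -(addn1 t) !natrD.
  have k0 : (0 : R) <= t%:R by [].
  move: (t%:R : R) k0 => k k0.
  field; rewrite gt_eqF //; lra.
suff h1 : f (x t.+1) - Cf / 2 - 2 * (1 + eps) * Cf / (t%:R + 2) <= (Aw R t)^-1 * \sum_(i < t.+1) term i.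
  have k0 : (0 : R) <= t%:R by [].
  have q0 : 0 <= eps * (Cf / (t%:R + 2)) by rewrite mulr_ge0 // divr_ge0 //; lra.
  have e1 : 2 * (1 + eps) * Cf / (t%:R + 2) = 2 * (Cf / (t%:R + 2)) + 2 * (eps * (Cf / (t%:R + 2))) by ring.
  have e2 : 2 * Cf / (t%:R + 2) * (1 + 2 * eps) = 2 * (Cf / (t%:R + 2)) + 4 * (eps * (Cf / (t%:R + 2))) by ring.
  lra.
rewrite [_^-1 * _]mulrC ler_pdivlMr //.
have e' : (f (x t.+1) - Cf / 2 - 2 * (1 + eps) * Cf / (t%:R + 2)) * Aw R t =
   Aw R t * f (x t.+1) - Aw R t * Cf / 2 - (2 * (t.+1)%:R * Cf + 2 * (t.+1)%:R * eps * Cf).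
  rewrite -e; ring.
rewrite e'; lra.
Qed.
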